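(* For monomials $m,m'$ of $\mathcal{A}$ with coefficient $1$, we have $m\le m'$ if and only if $\mathbf{w}(m)\le\mathbf{w}(m')$. Furthermore, the poset $(\mathbf{Z}_{\ge0}^r)^\star$ is noetherian: for any sequence $x_1,x_2,\dots$ of its elements there exist $i<j$ with $x_i\le x_j$.
   Context: Let $\mathbf{k}$ be a commutative noetherian ring, $r$ a positive integer, $x_1,\dots,x_r$ the standard basis of $\mathbf{k}^r$ (so $\mathrm{Sym}^d\mathbf{k}^r$ is the space of degree-$d$ polynomials in $x_1,\dots,x_r$). Let $\mathcal{A}=\bigoplus_{n,d\ge0}\mathcal{A}_{d,n}$ with $\mathcal{A}_{d,n}=(\mathrm{Sym}^d\mathbf{k}^r)^{\otimes n}$ (tensor over $\mathbf{k}$). A split $\sigma$ of $[n+m]$ is a pair of a subset $\{i_1<\cdots<i_n\}$ of $[n+m]=\{1,\dots,n+m\}$ and its complement $\{j_1<\cdots<j_m\}$; it defines the shuffle product $\cdot_\sigma:\mathcal{A}_{d,n}\otimes\mathcal{A}_{d,m}\to\mathcal{A}_{d,n+m}$, $(u_1\otimes\cdots\otimes u_n)\cdot_\sigma(v_1\otimes\cdots\otimes v_m)=w_1\otimes\cdots\otimes w_{n+m}$ with $w_{i_k}=u_k$, $w_{j_k}=v_k$ (and $f\cdot_\sigma g=0$ if bidegrees do not match $\sigma$). The product $*:\mathcal{A}_{d,n}\otimes\mathcal{A}_{e,n}\to\mathcal{A}_{d+e,n}$ multiplies factorwise, $(u_1\otimes\cdots\otimes u_n)*(v_1\otimes\cdots\otimes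 v_n)=u_1v_1\otimes\cdots\otimes u_nv_n$, and all other products are $0$. An ideal of $\mathcal{A}$ is a bihomogeneous subspace $I$ with $g*f\in I$ and $g\cdot_\sigma f\in I$ for all $f\in I$, $g\in\mathcal{A}$ and splits $\sigma$. A monomial is an element $w_1\otimes\cdots\otimes w_n$ with each $w_i$ a scalar multiple of a monomial $x_{j_1}\cdots x_{j_d}$. For monomials $m,m'$ with coefficient $1$, $m\le m'$ means $m'$ lies in the ideal generated by $m$. Order $\mathbf{Z}_{\ge0}^r$ pointwise. $(\mathbf{Z}_{\ge0}^r)^\star$ is the set of finite words with letters in $\mathbf{Z}^r_{\ge0}$, with $(w_1,\dots,w_n)\le(w'_1,\dots,w'_{m})$ iff there exist $1\le i_1<\cdots<i_n\le m$ with $w_j\le w'_{i_j}$ for all $j$. For a monomial $m=w_1\otimes\cdots\otimes w_n$, $\mathbf{w}(m)$ is the word of exponent vectors of $w_1,\dots,w_n$. *)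

(* Defs.v *)
From HB Require Import structures.
From mathcomp Require Import all_boot all_order all_algebra.
From mathcomp Require Import finmap.
From mathcomp.multinomials Require Import monalg.

Set Implicit Arguments.
Unset Strict Implicit.
Unset Printing Implicit Defensive.

Import GRing.Theory.
Local Open Scope ring_scope.

Definition ring_ideal (R : comNzRingType) (I : R -> Prop) : Prop :=
  [/\ I 0, (forall x y, I x -> I y -> I (x + y)) & (forall a x, I x -> I (a * x))].

Definition noetherian_ring (R : comNzRingType) : Prop :=
  forall I : nat -> R -> Prop,
    (forall n, ring_ideal (I n)) ->
    (forall n x, I n x -> I n.+1 x) ->
    exists N, forall n x, (N <= n)%N -> I n x -> I N x.

(* an element of Z_{>=0}^r is an r-tuple of naturals; a monomial x^a of degree
   sumn a in Sym k^r is identified with its exponent vector a. *)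
Definition vle (r : nat) (a b : r.-tuple nat) : bool :=
  [forall i : 'I_r, tnth a i <= tnth b i]%N.

Definition vadd (r : nat) (a b : r.-tuple nat) : r.-tuple nat :=
  [tuple (tnth a i + tnth b i)%N | i < r].

Definition word_le (r : nat) (w w' : seq (r.-tuple nat)) : Prop :=
  exists2 t, subseq t w' & all2 (@vle r) w t.

(* basis keys (d, w): d the degree, w the word of exponent vectors; the key
   (d, w) with every letter of total degree d stands for the pure tensor of
   monomials x^{w_1} (x) ... (x) x^{w_n} in A_{d, size w}. The degree d is kept
   so that A_{d,0} = k are distinct for distinct d. *)
Definition key (r : nat) := (nat * seq (r.-tuple nat))%type.

Definition valid_key (r : nat) (a : key r) : bool :=
  all (fun x : r.-tuple nat => sumn x == a.1) a.2.

Definition Alg (k : comNzRingType) (r : nat) := {malg k[key r]}.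

(* A = (+)_{d,n} A_{d,n} is the submodule of elements supported on valid keys *)
Definition inA (k : comNzRingType) (r : nat) (f : Alg k r) : Prop :=
  forall a, a \in msupp f -> valid_key a.

Definition hcomp (k : comNzRingType) (r : nat) (d n : nat) (f : Alg k r) : Alg k r :=
  \sum_(a <- msupp f | (a.1 == d) && (size a.2 == n)) << f@_a *g a >>.

(* shuffles: a split sigma of [n+m] is encoded by a bitseq s of size n+m,
   with s_i = true iff i belongs to {i_1 < ... < i_n}; n = count id s. *)
Fixpoint interleave (T : Type) (s : bitseq) (u v : seq T) : seq T :=
  match s with
  | [::] => [::]
  | true :: s' => match u with x :: u' => x :: interleave s' u' v | [::] => [::] end
  | false :: s' => match v with y :: v' => y :: interleave s' u v' | [::] => [::] end
  end.

Definition split_n (s : bitseq) : nat := count id s.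
Definition split_m (s : bitseq) : nat := (size s - count id s)%N.

(* u .sigma v on basis keys; None (product 0) when bidegrees do not match sigma *)
Definition shuf_key (r : nat) (s : bitseq) (a b : key r) : option (key r) :=
  if [&& a.1 == b.1, size a.2 == split_n s & size b.2 == split_m s]
  then Some (a.1, interleave s a.2 b.2) else None.

Definition shufA (k : comNzRingType) (r : nat) (s : bitseq) (f g : Alg k r) : Alg k r :=
  \sum_(a <- msupp f) \sum_(b <- msupp g)
     (if shuf_key s a b is Some c then << f@_a * g@_b *g c >> else 0).

Definition mul_key (r : nat) (a b : key r) : option (key r) :=
  if size a.2 == size b.2
  then Some ((a.1 + b.1)%N, [seq vadd p.1 p.2 | p <- zip a.2 b.2]) else None.

Definition mulA (k : comNzRingType) (r : nat) (f g : Alg k r) : Alg k r :=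
  \sum_(a <- msupp f) \sum_(b <- msupp g)
     (if mul_key a b is Some c then << f@_a * g@_b *g c >> else 0).

Definition is_idealA (k : comNzRingType) (r : nat) (I : Alg k r -> Prop) : Prop :=
  [/\ forall f, I f -> inA f,
      I 0,
      (forall f g, I f -> I g -> I (f + g)),
      (forall (c : k) f, I f -> I (c *: f))
    & (forall f d n, I f -> I (hcomp d n f))] /\
  (forall f g, inA g -> I f -> I (mulA g f)) /\
  (forall f g (s : bitseq), inA g -> I f -> I (shufA s g f)).

Definition monoA (k : comNzRingType) (r : nat) (d : nat) (w : seq (r.-tuple nat))
  : Alg k r := << ((d, w) : key r) >>.

(* m <= m' iff m' lies in the ideal generated by m (= intersection of all
   ideals containing m) *)
Definition mon_le (k : comNzRingType) (r : nat) (m m' : Alg k r) : Prop :=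
  forall I : Alg k r -> Prop, is_idealA I -> I m -> I m'.

(* Main.v *)
Require Import Defs.
From HB Require Import structures.
From mathcomp Require Import all_boot all_order all_algebra.
From mathcomp Require Import finmap.
From mathcomp.multinomials Require Import monalg.
From Stdlib Require Import Classical ClassicalEpsilon.
From mathcomp Require Import zify.

Set Implicit Arguments.
Unset Strict Implicit.
Unset Printing Implicit Defensive.
Import GRing.Theory.

Lemma subseq_consE (T : eqType) (x y : T) t u :
  subseq (y :: t) (x :: u) = if y == x then subseq t u else subseq (y :: t) u.
Proof. by rewrite /=; case: (y == x). Qed.

Section Tup.
Variable r : nat.
Implicit Types a b c : r.-tuple nat.

Lemma sumn_tuple a : sumn a = \sum_(i < r) tnth a i.
Proof. by rewrite sumnE big_tuple. Qed.

Lemma sumn_vadd a b : sumn (vadd a b) = (sumn a + sumn b)%N.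
Proof. by rewrite !sumn_tuple -big_split; apply: eq_bigr => i _; rewrite tnth_mktuple. Qed.

Lemma vle_sumn a b : vle a b -> (sumn a <= sumn b)%N.
Proof. by move/forallP=> H; rewrite !sumn_tuple; apply: leq_sum => i _; apply: H. Qed.

Lemma vle_refl a : vle a a.
Proof. by apply/forallP. Qed.

Lemma vle_trans a b c : vle a b -> vle b c -> vle a c.
Proof. by move/forallP=> H1 /forallP H2; apply/forallP=> i; apply: leq_trans (H1 i) (H2 i). Qed.

Lemma vle_vadd a b : vle b (vadd a b).
Proof. by apply/forallP=> i; rewrite tnth_mktuple leq_addl. Qed.

Definition vsub a b : r.-tuple nat := [tuple (tnth a i - tnth b i)%N | i < r].

Lemma vsubK a b : vle b a -> vadd (vsub a b) b = a.
Proof.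
move/forallP=> H; apply: eq_from_tnth => i.
by rewrite !tnth_mktuple subnK.
Qed.

Lemma all2_vle_trans (u v w : seq (r.-tuple nat)) :
  all2 (@vle r) u v -> all2 (@vle r) v w -> all2 (@vle r) u w.
Proof.
elim: u v w => [|x u IH] [|y v] [|z w] //= /andP[xy uv] /andP[yz vw].
by rewrite (vle_trans xy yz) (IH _ _ uv vw).
Qed.

Lemma all2_vle_refl (u : seq (r.-tuple nat)) : all2 (@vle r) u u.
Proof. by elim: u => //= x u ->; rewrite vle_refl. Qed.

Lemma subseq_all2 (t u u' : seq (r.-tuple nat)) : subseq t u -> all2 (@vle r) u u' ->
  exists2 t', subseq t' u' & all2 (@vle r) t t'.
Proof.
elim: u t u' => [|x u IH] t [|x' u'] st //.
- by move: st; rewrite subseq0 => /eqP-> _; exists [::].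
- move=> /andP[xx' uu']; case: t st => [|y t] st.
    by exists [::] => //; apply: sub0seq.
  move: st; rewrite subseq_consE; case: eqP => [->|_] st.
    case: (IH _ _ st uu') => t' s' a'; exists (x' :: t').
      by rewrite subseq_consE eqxx.
    by rewrite /= xx' a'.
  case: (IH _ _ st uu') => t' s' a'; exists t' => //.
  exact: subseq_trans s' (subseq_cons _ _).
Qed.

Lemma word_le_refl (w : seq (r.-tuple nat)) : word_le w w.
Proof. by exists w => //; apply: all2_vle_refl. Qed.

Lemma word_le_all2 (w u u' : seq (r.-tuple nat)) :
  word_le w u -> all2 (@vle r) u u' -> word_le w u'.
Proof.
case=> t st wt uu'; case: (subseq_all2 st uu') => t' s' tt'.
by exists t' => //; apply: all2_vle_trans wt tt'.
Qed.

Lemma word_le_subseq (w u u' : seq (r.-tuple nat)) :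
  word_le w u -> subseq u u' -> word_le w u'.
Proof. by case=> t st wt uu'; exists t => //; apply: subseq_trans st uu'. Qed.

Lemma all2_vadd (p q : seq (r.-tuple nat)) : size p = size q ->
  all2 (@vle r) q [seq vadd x.1 x.2 | x <- zip p q].
Proof.
elim: p q => [|x p IH] [|y q] //= [/IH ->]; by rewrite vle_vadd.
Qed.

Lemma all_vadd (p q : seq (r.-tuple nat)) (e d : nat) :
  all (fun x : r.-tuple nat => sumn x == e) p -> all (fun x : r.-tuple nat => sumn x == d) q ->
  all (fun x : r.-tuple nat => sumn x == (e + d)%N) [seq vadd x.1 x.2 | x <- zip p q].
Proof.
elim: p q => [|x p IH] [|y q] //= /andP[/eqP ex ap] /andP[/eqP dy aq].
by rewrite sumn_vadd ex dy eqxx IH.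
Qed.

Lemma fwd_mul (w t : seq (r.-tuple nat)) (d d' : nat) :
  all2 (@vle r) w t -> all (fun x : r.-tuple nat => sumn x == d) w ->
  all (fun x : r.-tuple nat => sumn x == d') t ->
  exists v, [/\ size v = size w, all (fun x : r.-tuple nat => sumn x == (d' - d)%N) v &
     [seq vadd x.1 x.2 | x <- zip v w] = t].
Proof.
elim: w t => [|x w IH] [|y t] //=; first by exists [::].
move=> /andP[xy wt] /andP[/eqP sx aw] /andP[/eqP sy at_].
case: (IH _ wt aw at_) => v [sv av ev].
exists (vsub y x :: v); split => /=; first by rewrite sv.
  have E : sumn (vsub y x) = (d' - d)%N.
    by have := sumn_vadd (vsub y x) x; rewrite vsubK // sx sy => ->; rewrite addnK.
  by rewrite E eqxx av.
by rewrite vsubK // ev.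
Qed.

End Tup.

Lemma interleave_subseq (T : eqType) (s : bitseq) (u v : seq T) :
  size u = count id s -> size v = (size s - count id s)%N ->
  subseq v (interleave s u v).
Proof.
elim: s u v => [|b s IH] u v /=.
  by move=> _ /eqP; rewrite size_eq0 => /eqP->.
have cs := count_size id s.
case: b => /=.
  case: u => [|x u] //= [hu] hv.
  apply: subseq_trans (IH u v hu _) (subseq_cons _ _).
  by rewrite hv subSS.
rewrite add0n; case: v => [|y v] hu hv; first by apply: sub0seq.
rewrite subseq_consE eqxx; apply: IH => //.
by move: hv => /= hv; lia.
Qed.

Lemma interleave_all (T : Type) (P : pred T) (s : bitseq) (u v : seq T) :
  all P u -> all P v -> all P (interleave s u v).
Proof.
elim: s u v => [|b s IH] u v hu hv //=.
case: b.
  by case: u hu => [|x u] //= /andP[-> pu]; exact: IH.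
by case: v hv => [|y v] //= /andP[-> pv]; exact: IH.
Qed.

Lemma split_exists (T : eqType) (P : pred T) (t w : seq T) :
  subseq t w -> all P w ->
  exists s u, [/\ interleave s u t = w, size u = count id s,
     size t = (size s - count id s)%N & all P u].
Proof.
elim: w t => [|x w IH] t.
  by rewrite subseq0 => /eqP-> _; exists [::], [::].
move=> + /andP[px pw]; case: t => [|y t] st.
  case: (IH [::] (sub0seq _) pw) => s [u [e su st0 pu]].
  exists (true :: s), (x :: u); split => /=; rewrite ?e ?su ?px //.
move: st; rewrite subseq_consE; case: eqP => [->|_] st.
  case: (IH _ st pw) => s [u [e su st0 pu]].
  exists (false :: s), u; split => //=; first by rewrite e.
  by rewrite st0 add0n; have := count_size id s; lia.
case: (IH _ st pw) => s [u [e su st0 pu]].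
exists (true :: s), (x :: u); split => /=; rewrite ?e ?su ?px //.
Qed.

Section Alg.
Variables (k : comNzRingType) (r : nat).
Local Open Scope ring_scope.

Lemma sum_nz (I : Type) (s : seq I) (P : pred I) (F : I -> Alg k r) c :
  (\sum_(i <- s | P i) F i)@_c != 0 -> exists i, (F i)@_c != 0.
Proof.
elim: s => [|i s IH]; rewrite ?big_nil ?big_cons ?mcoeff0 ?eqxx //.
case: (P i) => //; rewrite mcoeffD; case: (eqVneq (F i)@_c 0) => [->|].
  by rewrite add0r; exact: IH.
by move=> h _; exists i.
Qed.

Lemma monoA_coef (d : nat) (w : seq (r.-tuple nat)) (a : key r) : (monoA k d w)@_a = (((d, w) : key r) == a)%:R.
Proof. by rewrite /monoA mcoeffU. Qed.

Lemma msupp_monoA (d : nat) (w : seq (r.-tuple nat)) : msupp (monoA k d w) = [fset ((d, w) : key r)]%fset.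
Proof. by rewrite /monoA msuppU oner_eq0. Qed.

Lemma mulA_mono (e d : nat) (v w : seq (r.-tuple nat)) : size v = size w ->
  Defs.mulA (monoA k e v) (monoA k d w) =
  monoA k (e + d)%N [seq vadd x.1 x.2 | x <- zip v w].
Proof.
move=> sv; rewrite /Defs.mulA !msupp_monoA !big_seq_fset1 /mul_key /= sv eqxx.
by rewrite !monoA_coef !eqxx mulr1.
Qed.

Lemma shufA_mono (s : bitseq) (d : nat) (u t : seq (r.-tuple nat)) : size u = count id s ->
  size t = (size s - count id s)%N ->
  shufA s (monoA k d u) (monoA k d t) = monoA k d (interleave s u t).
Proof.
move=> su st; rewrite /shufA !msupp_monoA !big_seq_fset1 /shuf_key /=.
by rewrite /split_n /split_m su st !eqxx !monoA_coef !eqxx mulr1.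
Qed.

Lemma all_sub (T : eqType) (P : pred T) (t w : seq T) :
  subseq t w -> all P w -> all P t.
Proof. by move=> /mem_subseq st /allP H; apply/allP => x /st /H. Qed.

Lemma dd_le (w t : seq (r.-tuple nat)) (d d' : nat) :
  (0 < size w)%N -> all2 (@vle r) w t ->
  all (fun x : r.-tuple nat => sumn x == d) w ->
  all (fun x : r.-tuple nat => sumn x == d') t -> (d <= d')%N.
Proof.
case: w t => [|x w] [|y t] //= _ /andP[/vle_sumn xy _].
by move=> /andP[/eqP <- _] /andP[/eqP <- _].
Qed.

Lemma part1 (d d' : nat) (w w' : seq (r.-tuple nat)) :
  (0 < size w)%N ->
  all (fun x : r.-tuple nat => sumn x == d) w ->
  all (fun x : r.-tuple nat => sumn x == d') w' ->
  (mon_le (monoA k d w) (monoA k d' w') <-> word_le w w').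
Proof.
move=> hw vw vw'; split.
  pose I (f : Alg k r) := forall a, f@_a != 0 -> valid_key a /\ word_le w a.2.
  have II : is_idealA I.
    split; [split|split].
    - move=> f If a; rewrite -mcoeff_neq0 => /If []//.
    - by move=> a; rewrite mcoeff0 eqxx.
    - move=> f g If Ig a; rewrite mcoeffD; case: (eqVneq f@_a 0) => [->|fa].
        by rewrite add0r; exact: Ig.
      by move=> _; exact: If.
    - move=> c f If a; rewrite mcoeffZ; case: (eqVneq f@_a 0) => [->|fa].
        by rewrite mulr0 eqxx.
      by move=> _; exact: If.
    - move=> f d0 n0 If a; rewrite /hcomp => /sum_nz [b]; rewrite mcoeffU.
      by case: (eqVneq b a) => [<-|]; rewrite ?mulr1n ?mulr0n ?eqxx //; exact: If.
    - move=> f g ga If a /sum_nz [x] /sum_nz [y].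
      case E: (mul_key x y) => [c|]; last by rewrite mcoeff0 eqxx.
      rewrite mcoeffU; case: (eqVneq c a) => [<-|]; rewrite ?mulr0n ?eqxx // mulr1n => nz.
      have gx : g@_x != 0 by apply: contraNneq nz => ->; rewrite mul0r.
      have fy : f@_y != 0 by apply: contraNneq nz => ->; rewrite mulr0.
      have vx : valid_key x by apply: ga; rewrite -mcoeff_neq0.
      case: (If y fy) => vy wy.
      move: E; rewrite /mul_key; case: eqP => // sxy [<-]; split.
        exact: all_vadd.
      exact: word_le_all2 wy (all2_vadd sxy).
    - move=> f g s ga If a /sum_nz [x] /sum_nz [y].
      case E: (shuf_key s x y) => [c|]; last by rewrite mcoeff0 eqxx.
      rewrite mcoeffU; case: (eqVneq c a) => [<-|]; rewrite ?mulr0n ?eqxx // mulr1n => nz.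
      have gx : g@_x != 0 by apply: contraNneq nz => ->; rewrite mul0r.
      have fy : f@_y != 0 by apply: contraNneq nz => ->; rewrite mulr0.
      have vx : valid_key x by apply: ga; rewrite -mcoeff_neq0.
      case: (If y fy) => vy wy.
      move: E; rewrite /shuf_key; case: ifP => // /and3P[/eqP exy /eqP sx /eqP sy] [<-].
      split.
        rewrite /valid_key /=; apply: interleave_all; [exact: vx | rewrite exy; exact: vy].
      apply: word_le_subseq wy _; exact: interleave_subseq.
  have Im : I (monoA k d w).
    move=> a; rewrite monoA_coef; case: (eqVneq ((d, w) : key r) a) => [<-|]; last by rewrite eqxx.
    by move=> _; split => //; exact: word_le_refl.
  move=> /(_ I II Im) /(_ (d', w')); rewrite monoA_coef eqxx oner_neq0.
  by case.
case=> t st wt I [[_ _ _ _ _] [Hmul Hshuf]] Im.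
have vt := all_sub st vw'.
case: (fwd_mul wt vw vt) => v [sv av ev].
have dd' : (d <= d')%N.
  exact: dd_le hw wt vw vt.
have H1 : I (monoA k d' t).
  rewrite -ev -{1}(subnK dd') -mulA_mono //; apply: Hmul => //.
  by move=> a; rewrite msupp_monoA inE => /eqP->.
case: (split_exists st vw') => s [u [e su st0 pu]].
rewrite -e -shufA_mono //; apply: Hshuf => //.
by move=> a; rewrite msupp_monoA inE => /eqP->.
Qed.

End Alg.
Lemma incr_all (f : nat -> nat) : (forall i, f i < f i.+1)%N ->
  forall i j, (i < j)%N -> (f i < f j)%N.
Proof.
move=> H i j; elim: j => [//|j IH]; rewrite ltnS leq_eqVlt => /orP[/eqP->//|/IH h].
exact: ltn_trans h (H j).
Qed.

Section Higman.
Variables (T : eqType) (R : rel T).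

Definition wle (w w' : seq T) : Prop := exists2 t, subseq t w' & all2 R w t.

Definition ASC := forall x : nat -> T, exists f : nat -> nat,
  (forall i j, (i < j)%N -> (f i < f j)%N) /\
  (forall i j, (i < j)%N -> R (x (f i)) (x (f j))).

Definition bad (x : nat -> seq T) := forall i j, (i < j)%N -> ~ wle (x i) (x j).

Definition Ext (p : seq (seq T)) :=
  exists x, bad x /\ forall i, (i < size p)%N -> x i = nth [::] p i.

Lemma min_exists (P : seq T -> Prop) : (exists w, P w) ->
  exists w, P w /\ forall w', P w' -> (size w <= size w')%N.
Proof.
move=> [w Pw].
have: forall n w, size w = n -> P w -> exists w, P w /\ forall w', P w' -> (size w <= size w')%N.
  elim/ltn_ind => n IH w0 Hs Pw0.
  case: (classic (exists w', P w' /\ (size w' < size w0)%N)) => [[w' [Pw' lt]]|nex].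
    by apply: (IH (size w') _ w' erefl Pw'); rewrite -Hs.
  exists w0; split => // w' Pw'; rewrite leqNgt; apply/negP => lt.
  by apply: nex; exists w'.
by move=> /(_ _ w erefl Pw).
Qed.

Definition MP (p : seq (seq T)) (w : seq T) := Ext (rcons p w) /\
    forall w', Ext (rcons p w') -> (size w <= size w')%N.
Definition Mw (p : seq (seq T)) : seq T := epsilon (inhabits [::]) (MP p).

Lemma Mw_spec p : Ext p -> Ext (rcons p (Mw p)) /\
    forall w', Ext (rcons p w') -> (size (Mw p) <= size w')%N.
Proof.
move=> [x [bx hx]]; apply: (epsilon_spec (inhabits [::]) (MP p)); apply: min_exists.
exists (x (size p)); exists x; split => // i; rewrite size_rcons ltnS nth_rcons.
by rewrite leq_eqVlt => /orP[/eqP->|lt]; rewrite ?ltnn ?eqxx // lt; apply: hx.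
Qed.

Fixpoint pre (n : nat) : seq (seq T) :=
  if n is n'.+1 then rcons (pre n') (Mw (pre n')) else [::].

Lemma size_pre n : size (pre n) = n.
Proof. by elim: n => //= n IH; rewrite size_rcons IH. Qed.

Definition B n := Mw (pre n).

Lemma nth_pre n i : (i < n)%N -> nth [::] (pre n) i = B i.
Proof.
elim: n => // n IH; rewrite ltnS /= nth_rcons size_pre leq_eqVlt.
by case/orP => [/eqP->|lt]; rewrite ?ltnn ?eqxx // lt IH.
Qed.

Lemma wle_cons_r u c a : wle u c -> wle u (a :: c).
Proof. by case=> t st at_; exists t => //; apply: subseq_trans st (subseq_cons _ _). Qed.

Lemma wle_cons a b u c : R a b -> wle u c -> wle (a :: u) (b :: c).
Proof. by move=> ab [t st at_]; exists (b :: t); rewrite /= ?eqxx ?ab. Qed.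

Theorem higman : ASC -> forall x, exists i j, (i < j)%N /\ wle (x i) (x j).
Proof.
move=> asc x0; apply: NNPP => ng.
have Ext0 : Ext [::].
  exists x0; split => // i j lt hw; apply: ng; by exists i, j.
have Extn : forall n, Ext (pre n).
  by elim => //= n IH; case: (Mw_spec IH).
have Bbad : bad B.
  move=> i j lt; case: (Extn j.+1) => x [bx hx].
  have ij : (i < j.+1)%N by apply: ltn_trans lt _.
  rewrite -(nth_pre ij) -(nth_pre (ltnSn j)) -!hx ?size_pre //.
  exact: bx.
have Bne : forall i, B i <> [::].
  move=> i Bi; apply: (Bbad i i.+1 (ltnSn i)); rewrite Bi.
  by exists [::] => //; apply: sub0seq.
have [t0 _] : exists t0 : T, True by case E0: (B 0) (Bne 0) => [|t0 _] //; exists t0.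
pose h i := head t0 (B i); pose C i := behead (B i).
have BE : forall i, B i = h i :: C i.
  by move=> i; rewrite /h /C; case: (B i) (Bne i).
case: (asc h) => f [incf Rf].
have f0le : forall n, (f 0 <= f n)%N.
  by case=> // n; apply/ltnW/incf.
pose y k := if (k < f 0)%N then B k else C (f (k - f 0)).
have ybad : bad y.
  move=> i j lt; rewrite /y.
  case: ifP => ilt; case: ifP => jlt.
  - exact: Bbad.
  - move=> hw; apply: (Bbad i (f (j - f 0))).
      by apply: leq_trans ilt (f0le _).
    by rewrite (BE (f _)); apply: wle_cons_r.
  - by move: (ltn_trans lt jlt); rewrite ilt.
  - move=> hw; have ab : (i - f 0 < j - f 0)%N.
      by move: ilt jlt lt => /negbT; rewrite -leqNgt => ? /negbT; rewrite -leqNgt => ? ?; lia.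
    apply: (Bbad _ _ (incf _ _ ab)); rewrite !BE; apply: wle_cons => //.
    exact: Rf.
have Ey : Ext (rcons (pre (f 0)) (C (f 0))).
  exists y; split => // i; rewrite size_rcons size_pre ltnS nth_rcons size_pre /y.
  rewrite leq_eqVlt => /orP[/eqP->|lt]; first by rewrite ltnn eqxx subnn.
  by rewrite lt nth_pre.
have := (Mw_spec (Extn (f 0))).2 _ Ey.
by rewrite -/(B (f 0)) BE /= ltnn.
Qed.
End Higman.

Lemma nat_minpos (y : nat -> nat) n :
  exists i, (n <= i)%N /\ forall j, (n <= j)%N -> (y i <= y j)%N.
Proof.
have: forall v i, y i = v -> (n <= i)%N ->
    exists i, (n <= i)%N /\ forall j, (n <= j)%N -> (y i <= y j)%N.
  elim/ltn_ind => v IH i yi ni.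
  case: (classic (exists j, (n <= j)%N /\ (y j < y i)%N)) => [[j [nj lt]]|nex].
    by apply: (IH (y j) _ j erefl nj); rewrite -yi.
  exists i; split => // j nj; rewrite leqNgt; apply/negP => lt; apply: nex.
  by exists j.
by move/(_ _ n erefl (leqnn n)).
Qed.

Lemma nat_asc (y : nat -> nat) : exists f : nat -> nat,
  (forall i j, (i < j)%N -> (f i < f j)%N) /\
  (forall i j, (i < j)%N -> (y (f i) <= y (f j))%N).
Proof.
pose P n i := (n <= i)%N /\ forall j, (n <= j)%N -> (y i <= y j)%N.
pose g n := epsilon (inhabits 0%N) (P n).
have gP : forall n, P n (g n) by move=> n; apply: epsilon_spec; apply: nat_minpos.
pose f := fix f k := if k is k'.+1 then g (f k').+1 else g 0.
have fP : forall k j, (f k <= j)%N -> (y (f k) <= y j)%N.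
  case=> [|k] j lj; first by apply: (gP 0).2.
  by apply: (gP _).2; apply: leq_trans lj; apply: (gP _).1.
have inc : forall i, (f i < f i.+1)%N by move=> i; exact: (gP _).1.
exists f; split; first exact: incr_all.
by move=> i j /(incr_all inc) /ltnW; apply: fP.
Qed.

Lemma dickson_gen (r : nat) (s : seq 'I_r) (x : nat -> r.-tuple nat) :
  exists f : nat -> nat,
  (forall i j, (i < j)%N -> (f i < f j)%N) /\
  (forall i j, (i < j)%N -> all (fun c => tnth (x (f i)) c <= tnth (x (f j)) c)%N s).
Proof.
elim: s => [|c s [f [incf Hf]]]; first by exists id.
case: (nat_asc (fun k => tnth (x (f k)) c)) => g [incg Hg].
exists (f \o g); split => [i j lt|i j lt] /=; first by apply/incf/incg.
by rewrite Hg // Hf //; apply: incg.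
Qed.

Lemma dickson (r : nat) : ASC (@vle r).
Proof.
move=> x; case: (dickson_gen (enum 'I_r) x) => f [incf Hf].
exists f; split => // i j lt; apply/forallP => c.
by move/allP: (Hf i j lt) => /(_ c); rewrite mem_enum; apply.
Qed.

Lemma part2 (r : nat) (x : nat -> seq (r.-tuple nat)) :
  exists i j, (i < j)%N /\ word_le (x i) (x j).
Proof. exact: (higman (@dickson r)). Qed.

Theorem proposition2p4 (k : comNzRingType) (r : nat) :
  noetherian_ring k -> (0 < r)%N ->
  (forall (d d' : nat) (w w' : seq (r.-tuple nat)),
      (0 < size w)%N ->
      all (fun x : r.-tuple nat => sumn x == d) w ->
      all (fun x : r.-tuple nat => sumn x == d') w' ->
      (mon_le (monoA k d w) (monoA k d' w') <-> word_le w w'))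
  /\
  (forall x : nat -> seq (r.-tuple nat),
      exists i j, (i < j)%N /\ word_le (x i) (x j)).
Proof.
move=> _ _; split; first exact: part1.
exact: part2.
Qed.
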